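(* Fix integers $q\ge 1$ and $k\ge 3$, and let $G(q,k)$ be the graph on vertex set $\{v_0,v_1,\ldots,v_{kq}\}$ in which, with all indices taken modulo $kq+1$, the neighbourhood of $v_i$ is $$\{v_{i-1},v_{i+1}\}\cup\{v_{i+kj+m} : m=2,3,\ldots,k-1,\ j=0,1,\ldots,q-1\}.$$ Then $G(q,k)$ is $(k+1)$-vertex-critical.
   Context: $\chi(G)$ denotes the chromatic number of $G$. A graph $G$ is $t$-vertex-critical if $\chi(G)=t$ and $\chi(G-v)<t$ for every vertex $v$ of $G$. *)

(* Defs.v *)
From mathcomp Require Import all_boot.
Set Implicit Arguments. Unset Strict Implicit. Unset Printing Implicit Defensive.

Definition colorable (T : finType) (e : rel T) (A : {set T}) (n : nat) : bool :=
  [exists c : {ffun T -> 'I_n},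
     [forall x in A, forall y in A, (x != y) && e x y ==> (c x != c y)]].

Lemma colorable_exists (T : finType) (e : rel T) (A : {set T}) :
  exists n, colorable e A n.
Proof.
exists #|T|; apply/existsP; exists [ffun x => enum_rank x].
apply/forallP => x; apply/implyP => _; apply/forallP => y; apply/implyP => _.
apply/implyP => /andP [nxy _]; rewrite !ffunE.
by apply: contra nxy => /eqP /enum_rank_inj ->.
Qed.

Definition chi (T : finType) (e : rel T) (A : {set T}) : nat :=
  ex_minn (colorable_exists e A).

Definition vertex_critical (T : finType) (e : rel T) (t : nat) : Prop :=
  chi e [set: T] = t /\ forall v : T, chi e ([set: T] :\ v) < t.

(* The graph G(q,k) on vertices v_0..v_{kq}, represented by 'I_(k*q).+1;
   with d = (j - i) mod (kq+1), v_j is a neighbour of v_i iff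
   d = 1, d = -1 (= kq), or d = k*j' + m with 0 <= j' < q, 2 <= m <= k-1. *)
Definition Gqk (q k : nat) : rel 'I_(k * q).+1 :=
  fun x y =>
    let d := (y + (k * q).+1 - x) %% (k * q).+1 in
    [|| d == 1, d == k * q
      | [exists j : 'I_q, exists m : 'I_k, (2 <= m) && (d == k * j + m)]].
Arguments Gqk q k : clear implicits.

(* Main.v *)
Require Import Defs.
From mathcomp Require Import all_boot.
From mathcomp Require Import zify.

Definition adj (q k d : nat) : bool :=
  [|| d == 1, d == k * q
    | [exists j : 'I_q, exists m : 'I_k, (2 <= m) && (d == k * j + m)]].

Lemma GqkE q k (x y : 'I_(k*q).+1) :
  Gqk q k x y = adj q k ((y + (k*q).+1 - x) %% (k*q).+1).
Proof. by []. Qed.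

Definition vx q k (a : nat) : 'I_(k*q).+1 := Ordinal (ltn_pmod a (ltn0Sn (k*q))).

Lemma vx_val q k (x : 'I_(k*q).+1) : vx q k x = x.
Proof. by apply: val_inj; rewrite /= modn_small. Qed.

Lemma vxDn q k a : vx q k (a + (k*q).+1) = vx q k a.
Proof. by apply: val_inj; rewrite /= modnDr. Qed.

Lemma distE q k a d :
  Gqk q k (vx q k a) (vx q k (a + d)) = adj q k (d %% (k*q).+1).
Proof.
rewrite GqkE /=; congr adj; set n := (k*q).+1.
have Hlt : a %% n < n by rewrite ltn_pmod.
apply/eqP; rewrite -(eqn_modDr (a %% n)).
rewrite subnK; last by apply: leq_trans (ltnW Hlt) (leq_addl _ _).
by rewrite modnDr modn_mod modnDmr addnC.
Qed.

Lemma adj0 q k : 0 < k * q -> adj q k 0 = false.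
Proof.
move=> H; rewrite /adj /=; have -> : (0 == k * q) = false by lia.
apply/existsP => -[j /existsP [m /andP [h1 /eqP h2]]]; lia.
Qed.

Lemma Gqk_irr q k (x : 'I_(k*q).+1) : 0 < k * q -> Gqk q k x x = false.
Proof. by move=> H; rewrite GqkE addKn modnn adj0. Qed.

Lemma adj_small q k d : 1 <= q -> 1 <= d < k -> adj q k d.
Proof.
move=> hq /andP [h1 h2]; rewrite /adj; case: (eqVneq d 1) => hd; first by rewrite hd.
apply/orP; right; apply/orP; right; apply/existsP; exists (Ordinal hq).
apply/existsP; exists (Ordinal h2) => /=; apply/andP; split => //; lia.
Qed.

Lemma adj_far q k j r : 3 <= k -> 1 <= j < q -> r <= 1 -> ~~ adj q k (k * j + r).
Proof.
move=> hk /andP [hj1 hj2] hr; rewrite /adj; apply/negP => /orP [/eqP h|/orP [/eqP h|]].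
- have : k <= k * j by rewrite leq_pmulr.
  lia.
- have : k * j.+1 <= k * q by rewrite leq_mul2l hj2 orbT.
  rewrite mulnS; lia.
- move=> /existsP [j' /existsP [m /andP [hm /eqP h]]].
  have : (k * j + r) %% k = (k * j' + m) %% k by rewrite h.
  rewrite !(mulnC k) !modnMDl !modn_small //; try lia.
Qed.

Lemma kn q k : 1 <= q -> k < (k * q).+1.
Proof. by move=> hq; rewrite ltnS leq_pmulr. Qed.

Lemma no_kcol q k (c : 'I_(k*q).+1 -> 'I_k) : 1 <= q -> 3 <= k ->
  (forall x y, Gqk q k x y -> c x != c y) -> False.
Proof.
move=> hq hk H; have hkn := @kn q k hq.
have step : forall i, c (vx q k (i + k)) = c (vx q k i).
  move=> i; pose f (a : 'I_k) := c (vx q k (i + a)).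
  have finj : injective f.
    move=> a b fab; apply/eqP; apply/negPn/negP => nab.
    wlog hab : a b fab nab / a < b.
      move=> W; have [h|h|h] := ltngtP a b.
      - exact: W h.
      - by apply: (W b a) => //; rewrite eq_sym.
      - by move/eqP: nab; apply; apply: val_inj.
    have := H (vx q k (i + a)) (vx q k ((i + a) + (b - a))).
    rewrite distE modn_small; last by have := ltn_ord b; lia.
    rewrite adj_small //; last by have := ltn_ord b; lia.
    rewrite (_ : i + a + (b - a) = i + b); last by lia.
    by move=> /(_ isT) /eqP; apply; exact: fab.
  have [g fg gf] := injF_bij finj.
  set a := g (c (vx q k (i + k))).
  have fa : f a = c (vx q k (i + k)) by rewrite /a gf.
  case: (posnP a) => ha; first by rewrite -fa /f ha addn0.
  exfalso; have := H (vx q k (i + a)) (vx q k ((i + a) + (k - a))).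
  rewrite distE modn_small; last by have := ltn_ord a; lia.
  rewrite adj_small //; last by have := ltn_ord a; lia.
  rewrite (_ : i + a + (k - a) = i + k); last by have := ltn_ord a; lia.
  by move=> /(_ isT) /eqP; apply; exact: fa.
have per : forall t i, c (vx q k (i + k * t)) = c (vx q k i).
  elim => [|t IH] i; first by rewrite muln0 addn0.
  by rewrite mulnS addnA IH step.
have := per q 1; rewrite (_ : 1 + k * q = 0 + (k * q).+1) // vxDn => e.
have := H (vx q k 0) (vx q k (0 + 1)); rewrite distE modn_small ?adj_small //; last by lia.
  by rewrite add0n e eqxx => /(_ isT).
by lia.
Qed.

Lemma far_nonadj q k b j : 3 <= k -> 1 <= j < q ->
  ~~ Gqk q k (vx q k b) (vx q k (b + k * j)) &&
  ~~ Gqk q k (vx q k (b + k * j)) (vx q k b).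
Proof.
move=> hk /andP [hj1 hj2].
have hkj : k * j < k * q by rewrite ltn_pmul2l //; lia.
have hkj0 : 0 < k * j by rewrite muln_gt0; apply/andP; split; lia.
apply/andP; split.
  rewrite distE modn_small; last by lia.
  by rewrite -[k * j]addn0 adj_far //; lia.
rewrite -(vxDn q k b) (_ : b + (k * q).+1 = b + k * j + ((k * q).+1 - k * j)); last by lia.
rewrite distE modn_small; last by lia.
have e : k * (q - j) = k * q - k * j by rewrite mulnBr.
rewrite (_ : (k * q).+1 - k * j = k * (q - j) + 1); last by lia.
by rewrite adj_far //; lia.
Qed.

Definition col q k (hk : 0 < k) (v x : 'I_(k*q).+1) : 'I_k :=
  Ordinal (ltn_pmod ((x + ((k*q).+1 - v.+1)) %% (k*q).+1) hk).
Arguments col {q k}.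
Arguments far_nonadj {q k}.

Definition aoff q k (v z : 'I_(k*q).+1) := (z + ((k*q).+1 - v.+1)) %% (k*q).+1.
Arguments aoff {q k}.

Lemma col_ok q k (hq : 1 <= q) (hk3 : 3 <= k) (hk : 0 < k) (v x y : 'I_(k*q).+1) :
  x != v -> y != v -> Gqk q k x y -> col hk v x != col hk v y.
Proof.
set n := (k*q).+1.
pose a := aoff v.
have aE : forall z : 'I_n, z = vx q k (v.+1 + a z).
  move=> z; apply: val_inj; rewrite /= /a /aoff modnDmr.
  rewrite (_ : v.+1 + (z + (n - v.+1)) = z + n); last by have := ltn_ord v; lia.
  by rewrite modnDr modn_small.
have alt : forall z, z != v -> a z < k * q.
  move=> z hz; have : a z < n by rewrite ltn_pmod.
  rewrite ltnS leq_eqVlt => /orP [/eqP e|//]; exfalso.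
  move/eqP: hz; apply; rewrite (aE z) e; apply: val_inj => /=.
  rewrite (_ : v.+1 + k * q = v + n); last by lia.
  by rewrite modnDr modn_small.
have kq0 : 0 < k * q by rewrite muln_gt0; apply/andP; split; lia.
move=> hx hy hxy; apply/negP => /eqP hc.
have hc' : a x = a y %[mod k] by move: hc => /(congr1 val).
clearbody a; clear hc.
have key : forall u w : 'I_n, u != v -> w != v -> a u < a w -> a u = a w %[mod k] ->
    exists j, 1 <= j < q /\ v.+1 + a w = v.+1 + a u + k * j.
  move=> u w hu hw h hm.
  have dv : k %| a w - a u.
    by rewrite -eqn_mod_dvd; [rewrite eq_sym; apply/eqP | apply: ltnW].
  have [j ej] : exists j, a w - a u = k * j.
    by exists ((a w - a u) %/ k); rewrite mulnC divnK.
  move: (alt w hw) h ej; clear dv hm; move: (a u) (a w) => A B hB hAB hj.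
  exists j; split; last by lia.
  apply/andP; split.
    have : 0 < k * j by lia.
    by rewrite muln_gt0 => /andP [].
  rewrite -(ltn_pmul2l hk); lia.
have [h|h|h] := ltngtP (a x) (a y).
- have [j [hj e]] := key x y hx hy h hc'.
  have := far_nonadj (v.+1 + a x) j hk3 hj; rewrite -e -!aE hxy.
  by [].
- have [j [hj e]] := key y x hy hx h (esym hc').
  have := far_nonadj (v.+1 + a y) j hk3 hj; rewrite -e -!aE hxy andbF.
  by [].
- move: hxy; rewrite (aE x) (aE y) h Gqk_irr //.
Qed.

Arguments col_ok {q k} hq hk3 hk {v x y}.

Lemma colorable_chi_le (T : finType) (e : rel T) A n :
  colorable e A n -> chi e A <= n.
Proof. by move=> H; rewrite /chi; case: ex_minnP => m _; apply. Qed.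

Lemma not_col_small q k m : 1 <= q -> 3 <= k -> m <= k ->
  ~~ colorable (Gqk q k) [set: 'I_(k*q).+1] m.
Proof.
move=> hq hk hm; apply/negP => /existsP [c /forallP Hc].
apply: (@no_kcol q k (fun x => widen_ord hm (c x))) => // x y hxy.
have := Hc x; rewrite in_setT => /implyP /(_ isT) /forallP /(_ y).
rewrite in_setT => /implyP /(_ isT) /implyP.
have nxy : x != y by apply: contraTneq hxy => ->; rewrite Gqk_irr // muln_gt0; apply/andP; split; lia.
rewrite nxy hxy => /(_ isT); apply: contra => /eqP /(congr1 val) /= e.
by apply/eqP; apply: val_inj.
Qed.

Theorem lemma2p6 (q k : nat) (hq : 1 <= q) (hk : 3 <= k) :
  vertex_critical (Gqk q k) k.+1.
Proof.
have hk0 : 0 < k by lia.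
split.
- apply/eqP; rewrite eqn_leq; apply/andP; split.
    apply: colorable_chi_le; apply/existsP.
    exists [ffun x => if x == ord_max then (ord_max : 'I_k.+1)
                      else widen_ord (leqnSn k) (col hk0 ord_max x)].
    apply/forallP => x; apply/implyP => _; apply/forallP => y; apply/implyP => _.
    apply/implyP => /andP [nxy hxy]; rewrite !ffunE.
    case: (eqVneq x ord_max) => hx; case: (eqVneq y ord_max) => hy.
    + by move: nxy; rewrite hx hy eqxx.
    + by apply/eqP => /(congr1 val) /=; have := ltn_ord (col hk0 ord_max y); lia.
    + by apply/eqP => /(congr1 val) /=; have := ltn_ord (col hk0 ord_max x); lia.
    + have := col_ok hq hk hk0 hx hy hxy; apply: contra => /eqP /(congr1 val) /= e.
      by apply/eqP; apply: val_inj.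
  rewrite /chi; case: ex_minnP => m Hm _.
  rewrite ltnNge; apply/negP => hm; move: Hm; apply/negP; exact: not_col_small.
- move=> v; rewrite ltnS; apply: colorable_chi_le; apply/existsP.
  exists [ffun x => col hk0 v x].
  apply/forallP => x; apply/implyP; rewrite in_setD1 => /andP [hx _].
  apply/forallP => y; apply/implyP; rewrite in_setD1 => /andP [hy _].
  apply/implyP => /andP [nxy hxy]; rewrite !ffunE.
  exact: col_ok.
Qed.
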